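(* Let $\tilde A\in\widetilde{SL}(2,\mathbb R)$, let $a\in\mathbb R$, let $b:=\tilde A(a)$, so that $I:=[a,b)$ is a fundamental domain of $\mathbb R/\langle\tilde A\rangle$, and let $W(I)$ denote the winding number of $(a,b)$. Then: (1) if $\tilde A$ is conjugate to $\tilde E_\alpha$ with $\alpha>0$, then $W(I)=n$ if and only if $\alpha=n\pi$, and otherwise $W(I)=n+\frac12$, where $n\pi<\alpha<(n+1)\pi$; (2) if $\tilde A$ is conjugate to $\tilde P^+_n$, respectively $\tilde P^-_n$, with $n\in\mathbb N^*$, then $n-\frac12\le W(I)\le n$, respectively $n\le W(I)\le n+\frac12$; (3) if $\tilde A$ is conjugate to $\tilde H_n(\lambda)$ with $\lambda>1$ and $n\in\mathbb N^*$, then $n-\frac12\le W(I)\le n+\frac12$. In cases (2) and (3), $W(I)$ is an integer if and only if $\pi(a)\in\mathbb{RP}^1$ is a fixed point of the projection $\hat A\in PSL(2,\mathbb R)$ of $\tilde A$. Moreover, the bounds in the inequalities above are attained (for suitable $a$).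
   Context: Let $\pi:\mathbb R\to\mathbb{RP}^1$, $\pi(t)=[\cos t:\sin t]$, $\bar\pi(t)=(\cos t,\sin t)\in S^1$; $SL(2,\mathbb R)$ acts on $S^1$ by $A\cdot v=Av/\|Av\|$ and $PSL(2,\mathbb R)$ on $\mathbb{RP}^1$ by homographies. $\widetilde{SL}(2,\mathbb R)$ is the group of diffeomorphisms $\tilde A$ of $\mathbb R$ with $\bar\pi\circ\tilde A=A\cdot\bar\pi$ for some $A\in SL(2,\mathbb R)$; its projection $\hat A\in PSL(2,\mathbb R)$ is the class of $A$, and $\pi\circ\tilde A=\hat A\circ\pi$. $\tilde E_\alpha(x)=x+\alpha$. For $\hat A\in PSL(2,\mathbb R)$ with a fixed point in $\mathbb{RP}^1$, its canonical lift $\tilde A_0$ is the unique lift having a fixed point in $\mathbb R$. With $P^\pm=\begin{pmatrix}1&\pm1\\0&1\end{pmatrix}$ and $H(\lambda)=\begin{pmatrix}\lambda&0\\0&\lambda^{-1}\end{pmatrix}$ ($\lambda>0$, $\lambda\ne1$), let $\tilde P^\pm_0$, $\tilde H_0(\lambda)$ be the canonical lifts of their classes and $\tilde P^\pm_n:=\tilde P^\pm_0\tilde E_{n\pi}$, $\tilde H_n(\lambda):=\tilde H_0(\lambda)\tilde E_{n\pi}$. Conjugacy is in $\widetilde{SL}(2,\mathbb R)$. Winding number: for $a<b$, $W((a,b))=k$ if $b=a+k\pi$, $k\in\mathbb N$, and $W((a,b))=k+\frac12$ if $a+k\pi<b<a+(k+1)\pi$, $k\in\mathbb N$. *)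

(* Defs.v *)
From Stdlib Require Import Reals Lra ClassicalEpsilon.
From Coquelicot Require Import Coquelicot.
Open Scope R_scope.

Record mat := Mat { m11 : R; m12 : R; m21 : R; m22 : R }.
Definition det (A : mat) : R := m11 A * m22 A - m12 A * m21 A.
Definition mopp (A : mat) : mat := Mat (- m11 A) (- m12 A) (- m21 A) (- m22 A).
Definition mapply (A : mat) (v : R * R) : R * R :=
  (m11 A * fst v + m12 A * snd v, m21 A * fst v + m22 A * snd v).
Definition vnorm (v : R * R) : R := sqrt (fst v ^ 2 + snd v ^ 2).

Definition actS1 (A : mat) (v : R * R) : R * R :=
  let w := mapply A v in (fst w / vnorm w, snd w / vnorm w).

Definition barpi (t : R) : R * R := (cos t, sin t).

Definition smooth (f : R -> R) : Prop := forall (n : nat) (x : R), ex_derive_n f n x.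
Definition diffeo (f : R -> R) : Prop :=
  exists g : R -> R, (forall x, g (f x) = x) /\ (forall x, f (g x) = x)
                     /\ smooth f /\ smooth g.

Definition lifts (A : mat) (f : R -> R) : Prop :=
  forall t, barpi (f t) = actS1 A (barpi t).

Definition tildeSL (f : R -> R) : Prop :=
  diffeo f /\ exists A : mat, det A = 1 /\ lifts A f.

(* f in \widetilde{SL} projects to the class \hat A of A in PSL(2,R) *)
Definition projects_to (A : mat) (f : R -> R) : Prop :=
  tildeSL f /\ (lifts A f \/ lifts (mopp A) f).

(* canonical lift of \hat A: the unique lift with a fixed point in R *)
Definition is_canonical_lift (A : mat) (f : R -> R) : Prop :=
  projects_to A f /\ exists x, f x = x.
Definition canonical_lift (A : mat) : R -> R :=
  epsilon (inhabits (fun x : R => x)) (is_canonical_lift A).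

Definition tE (alpha : R) : R -> R := fun x => x + alpha.
Definition Pplus : mat := Mat 1 1 0 1.
Definition Pminus : mat := Mat 1 (-1) 0 1.
Definition Hmat (lam : R) : mat := Mat lam 0 0 (/ lam).

Definition tPplus (n : nat) : R -> R :=
  fun x => canonical_lift Pplus (tE (INR n * PI) x).
Definition tPminus (n : nat) : R -> R :=
  fun x => canonical_lift Pminus (tE (INR n * PI) x).
Definition tH (lam : R) (n : nat) : R -> R :=
  fun x => canonical_lift (Hmat lam) (tE (INR n * PI) x).

Definition conjugate (F G : R -> R) : Prop :=
  exists g, tildeSL g /\ forall x, F (g x) = g (G x).

Definition winding_rel (a b w : R) : Prop :=
  (exists k : nat, b = a + INR k * PI /\ w = INR k) \/
  (exists k : nat, a + INR k * PI < b < a + (INR k + 1) * PI /\ w = INR k + / 2).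
Definition W (a b : R) : R := epsilon (inhabits 0) (winding_rel a b).

(* RP^1: projective equality of nonzero vectors; \pi(t) = [cos t : sin t] *)
Definition proj_eq (u v : R * R) : Prop :=
  exists l : R, l <> 0 /\ u = (l * fst v, l * snd v).
Definition fixed_by_proj (F : R -> R) (t : R) : Prop :=
  exists A : mat, det A = 1 /\ lifts A F /\ proj_eq (mapply A (barpi t)) (barpi t).

Definition is_integer (x : R) : Prop := exists k : Z, x = IZR k.

(* Main.v *)
Require Import Defs.
From Stdlib Require Import Reals Lra Lia ZArith ClassicalEpsilon.
From Coquelicot Require Import Coquelicot.
Open Scope R_scope.

Fixpoint Cn (n : nat) (f : R -> R) : Prop :=
  match n with
  | O => True
  | S m => exists f' : R -> R, (forall x, is_derive f x (f' x)) /\ Cn m f'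
  end.

Lemma Cn_ext n : forall f g, (forall x, f x = g x) -> Cn n f -> Cn n g.
Proof.
induction n as [|n IH]; simpl; auto.
intros f g E [f' [H1 H2]]. exists f'. split; auto.
intro x. apply is_derive_ext with f; auto.
Qed.

Lemma Cn_le n : forall f, Cn (S n) f -> Cn n f.
Proof.
induction n as [|n IH]; simpl; auto.
intros f [f' [H1 H2]]. exists f'. split; auto.
Qed.

Lemma Cn_const n : forall c, Cn n (fun _ => c).
Proof.
induction n as [|n IH]; simpl; auto.
intros c. exists (fun _ => 0). split; auto.
intro x. apply (is_derive_const c x).
Qed.

Lemma Cn_id n : Cn n (fun x => x).
Proof.
destruct n; simpl; auto.
exists (fun _ => 1). split. intro x. apply (is_derive_id x). apply Cn_const.
Qed.

Lemma Cn_plus n : forall f g, Cn n f -> Cn n g -> Cn n (fun x => f x + g x).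
Proof.
induction n as [|n IH]; simpl; auto.
intros f g [f' [H1 H2]] [g' [H3 H4]].
exists (fun x => f' x + g' x). split; auto.
intro x. apply (is_derive_plus f g x (f' x) (g' x)); auto.
Qed.

Lemma Cn_mult n : forall f g, Cn n f -> Cn n g -> Cn n (fun x => f x * g x).
Proof.
induction n as [|n IH]; simpl; auto.
intros f g Hf Hg.
pose proof (Cn_le n f Hf) as Hf0. pose proof (Cn_le n g Hg) as Hg0.
destruct Hf as [f' [H1 H2]]. destruct Hg as [g' [H3 H4]].
exists (fun x => f' x * g x + f x * g' x). split.
- intro x. apply (is_derive_mult f g x (f' x) (g' x)); auto.
  intros; apply Rmult_comm.
- apply Cn_plus; apply IH; auto.
Qed.

Lemma Cn_inv n : forall g, (forall x, 0 < g x) -> Cn n g -> Cn n (fun x => / g x).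
Proof.
induction n as [|n IH]; simpl; auto.
intros g Hp Hg.
pose proof (Cn_le n g Hg) as Hg0.
destruct Hg as [g' [H3 H4]].
exists (fun x => -1 * g' x * (/ g x * / g x)). split.
- intro x. replace (-1 * g' x * (/ g x * / g x)) with (- g' x / g x ^ 2).
  apply is_derive_inv; auto. specialize (Hp x); lra.
  specialize (Hp x). field. lra.
- apply Cn_mult. apply Cn_mult. apply Cn_const. auto. apply Cn_mult; apply IH; auto.
Qed.

Lemma Cn_comp n : forall f g, Cn n f -> Cn n g -> Cn n (fun x => g (f x)).
Proof.
induction n as [|n IH]; simpl; auto.
intros f g Hf Hg.
pose proof (Cn_le n f Hf) as Hf0. pose proof (Cn_le n g Hg) as Hg0.
destruct Hf as [f' [H1 H2]]. destruct Hg as [g' [H3 H4]].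
exists (fun x => g' (f x) * f' x). split.
- intro x. replace (g' (f x) * f' x) with (scal (f' x) (g' (f x))).
  apply (is_derive_comp g f x (g' (f x)) (f' x)); auto. unfold scal; simpl; unfold mult; simpl. apply Rmult_comm.
- apply Cn_mult; auto.
Qed.

Lemma Cn_sincos n : Cn n sin /\ Cn n cos.
Proof.
induction n as [|n [IH1 IH2]]; simpl; auto.
split.
- exists cos. split; auto. intro x. apply is_derive_Reals. apply derivable_pt_lim_sin.
- exists (fun x => -1 * sin x). split.
  + intro x. apply is_derive_Reals. replace (-1 * sin x) with (- sin x) by ring.
    apply derivable_pt_lim_cos.
  + apply Cn_mult; auto. apply Cn_const.
Qed.

Lemma Cn_atan n : Cn n atan.
Proof.
destruct n; simpl; auto.
exists (fun x => / (1 + x * x)). split.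
- intro x. apply is_derive_Reals. replace (x * x) with (x ^ 2) by ring.
  apply derivable_pt_lim_atan.
- apply Cn_inv. intro x. nra. apply Cn_plus. apply Cn_const. apply Cn_mult; apply Cn_id.
Qed.

Lemma Derive_n_shift f f' : (forall x, is_derive f x (f' x)) ->
  forall m x, Derive_n f (S m) x = Derive_n f' m x.
Proof.
intros H m. induction m as [|m IH]; intro x.
- simpl. apply is_derive_unique. auto.
- change (Derive (Derive_n f (S m)) x = Derive (Derive_n f' m) x).
  apply Derive_ext. auto.
Qed.

Lemma Cn_ex_derive_n n : forall f, Cn n f -> forall x, ex_derive_n f n x.
Proof.
induction n as [|n IH]; simpl; auto.
intros f [f' [H1 H2]] x. destruct n as [|n].
- simpl. exists (f' x). auto.
- change (ex_derive (Derive_n f (S n)) x).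
  apply ex_derive_ext with (Derive_n f' n).
  intro t. symmetry. apply Derive_n_shift; auto.
  apply (IH f' H2 x).
Qed.

Lemma Cn_smooth f : (forall n, Cn n f) -> smooth f.
Proof. intros H n x. apply (Cn_ex_derive_n n). auto. Qed.

Definition dotf (A : mat) (t : R) : R :=
  cos t * (m11 A * cos t + m12 A * sin t) + sin t * (m21 A * cos t + m22 A * sin t).
Definition crossf (A : mat) (t : R) : R :=
  cos t * (m21 A * cos t + m22 A * sin t) - sin t * (m11 A * cos t + m12 A * sin t).
Definition Lf (A : mat) (t : R) : R := t + atan (crossf A t / dotf A t).
Definition posA (A : mat) : Prop := forall t, 0 < dotf A t.

Lemma sc1 t : sin t ^ 2 + cos t ^ 2 = 1.
Proof. pose proof (sin2_cos2 t). unfold Rsqr in H. lra. Qed.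

Lemma lifts_L A : posA A -> lifts A (Lf A).
Proof.
intros HA t. unfold Lf, barpi, actS1, mapply, vnorm. simpl.
pose proof (HA t) as HD. unfold dotf, crossf in *.
set (c := cos t) in *. set (s := sin t) in *.
set (w1 := m11 A * c + m12 A * s) in *. set (w2 := m21 A * c + m22 A * s) in *.
set (D := c * w1 + s * w2) in *. set (N := c * w2 - s * w1).
assert (Hcs : s ^ 2 + c ^ 2 = 1) by apply sc1.
rewrite cos_plus, sin_plus, cos_atan, sin_atan. fold c s.
set (S := sqrt (1 + (N / D)²)).
assert (HS : 0 < S). { apply sqrt_lt_R0. pose proof (Rle_0_sqr (N/D)); lra. }
assert (HS2 : S * S = 1 + (N/D)²). { apply sqrt_sqrt. pose proof (Rle_0_sqr (N/D)); lra. }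
assert (HQ : sqrt (w1 ^ 2 + w2 ^ 2) = S * D).
{ assert (E : w1 ^ 2 + w2 ^ 2 = (S * D) ^ 2).
  { replace ((S * D) ^ 2) with ((S * S) * D * D) by ring. rewrite HS2. unfold Rsqr.
    replace ((1 + N / D * (N / D)) * D * D) with (D * D + N * N) by (field; auto with real).
    idtac.
    unfold N, D.
    replace (w1 ^ 2 + w2 ^ 2) with ((w1 ^ 2 + w2 ^ 2) * (s ^ 2 + c ^ 2)) by (rewrite Hcs; ring).
    ring. }
  rewrite E. apply sqrt_pow2. nra. }
assert (HSn : S <> 0) by (apply Rgt_not_eq; lra).
assert (HDn : D <> 0) by (apply Rgt_not_eq; lra).
assert (E1 : c * D - s * N = w1).
{ unfold N, D. replace w1 with (w1 * (s ^ 2 + c ^ 2)) at 3 by (rewrite Hcs; ring). ring. }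
assert (E2 : s * D + c * N = w2).
{ unfold N, D. replace w2 with (w2 * (s ^ 2 + c ^ 2)) at 3 by (rewrite Hcs; ring). ring. }
replace (w1 * (w1 * 1) + w2 * (w2 * 1)) with (w1 ^ 2 + w2 ^ 2) by ring. rewrite HQ. f_equal.
- rewrite <- E1. field. auto.
- rewrite <- E2. field. auto.
Qed.

Lemma Cn_minus n f g : Cn n f -> Cn n g -> Cn n (fun x => f x - g x).
Proof.
intros Hf Hg. apply Cn_ext with (fun x => f x + (-1) * g x). intro; ring.
apply Cn_plus; auto. apply Cn_mult; auto. apply Cn_const.
Qed.

Ltac cn := repeat match goal with
 | |- Cn _ (fun x => _ + _) => apply Cn_plus
 | |- Cn _ (fun x => _ - _) => apply Cn_minus
 | |- Cn _ (fun x => _ * _) => apply Cn_mult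
 | |- Cn ?n sin => exact (proj1 (Cn_sincos n))
 | |- Cn ?n cos => exact (proj2 (Cn_sincos n))
 | |- Cn ?n (fun x => sin x) => exact (proj1 (Cn_sincos n))
 | |- Cn ?n (fun x => cos x) => exact (proj2 (Cn_sincos n))
 | |- Cn _ (fun x => x) => apply Cn_id
 | |- Cn _ (fun _ => ?c) => apply Cn_const
 end.

Lemma smooth_L A : posA A -> smooth (Lf A).
Proof.
intro HA. apply Cn_smooth. intro n. unfold Lf.
apply Cn_plus. apply Cn_id.
apply (Cn_comp n (fun t => crossf A t / dotf A t) atan). 2: apply Cn_atan.
unfold Rdiv. apply Cn_mult.
- unfold crossf. cn.
- apply Cn_inv. exact HA. unfold dotf. cn.
Qed.

Lemma vnorm_pos p q : ~ (p = 0 /\ q = 0) -> 0 < vnorm (p, q).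
Proof.
intro H. unfold vnorm; cbn [fst snd]. apply sqrt_lt_R0.
destruct (Req_dec p 0); destruct (Req_dec q 0); try tauto; nra.
Qed.

Lemma vnorm_scale x y r : 0 < r -> vnorm (x / r, y / r) = vnorm (x, y) / r.
Proof.
intro Hr. unfold vnorm; cbn [fst snd].
assert (E : (x / r) ^ 2 + (y / r) ^ 2 = (sqrt (x ^ 2 + y ^ 2) / r) ^ 2).
{ unfold Rdiv. rewrite !Rpow_mult_distr. rewrite pow2_sqrt. ring. nra. }
rewrite E. apply sqrt_pow2. apply Rmult_le_pos. apply sqrt_pos.
left; apply Rinv_0_lt_compat; auto.
Qed.

Definition adj (A : mat) : mat := Mat (m22 A) (- m12 A) (- m21 A) (m11 A).

Lemma adj_inv_l A : det A = 1 -> forall v, mapply A (mapply (adj A) v) = v.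
Proof.
intros H [x y]. unfold mapply, adj, det in *; simpl.
f_equal; [transitivity (x * (m11 A * m22 A - m12 A * m21 A)) | transitivity (y * (m11 A * m22 A - m12 A * m21 A))];
try (rewrite H; ring); ring.
Qed.

Lemma adj_inv_r A : det A = 1 -> forall v, mapply (adj A) (mapply A v) = v.
Proof.
intros H [x y]. unfold mapply, adj, det in *; simpl.
f_equal; [transitivity (x * (m11 A * m22 A - m12 A * m21 A)) | transitivity (y * (m11 A * m22 A - m12 A * m21 A))];
try (rewrite H; ring); ring.
Qed.

Lemma vnorm_barpi t : vnorm (barpi t) = 1.
Proof. unfold vnorm, barpi; cbn [fst snd]. replace (cos t ^ 2 + sin t ^ 2) with 1. apply sqrt_1.
pose proof (sc1 t); lra. Qed.

Lemma mapply_pos A B v : (forall u, mapply A (mapply B u) = u) -> vnorm v = 1 ->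
  0 < vnorm (mapply B v).
Proof.
intros H Hv. destruct (mapply B v) as [p q] eqn:E. apply vnorm_pos.
intros [-> ->]. pose proof (H v) as Hv'. rewrite E in Hv'.
unfold mapply in Hv'; cbn [fst snd] in Hv'. rewrite <- Hv' in Hv. unfold vnorm in Hv; cbn [fst snd] in Hv.
replace ((m11 A * 0 + m12 A * 0) ^ 2 + (m21 A * 0 + m22 A * 0) ^ 2) with 0 in Hv by ring.
rewrite sqrt_0 in Hv. lra.
Qed.

Lemma act_comp A B v : (forall u, mapply A (mapply B u) = u) -> vnorm v = 1 ->
  actS1 A (actS1 B v) = v.
Proof.
intros H Hv. pose proof (mapply_pos A B v H Hv) as Hr.
unfold actS1 at 2. destruct (mapply B v) as [p q] eqn:E. simpl fst; simpl snd.
set (r := vnorm (p, q)) in *.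
assert (E2 : mapply A (p / r, q / r) = (fst v / r, snd v / r)).
{ pose proof (H v) as Hv'. rewrite E in Hv'. rewrite <- Hv'. unfold mapply; simpl.
  f_equal; field; lra. }
unfold actS1. rewrite E2. rewrite vnorm_scale by auto.
destruct v as [v1 v2]; cbn [fst snd] in *. rewrite Hv. f_equal; field; lra.
Qed.

Lemma atan_bound' u : - (PI / 2) < atan u < PI / 2.
Proof. pose proof (atan_bound u). lra. Qed.

Lemma sin0_small z : sin z = 0 -> - PI < z < PI -> z = 0.
Proof.
intros H B. destruct (sin_eq_0_0 z H) as [k ->].
assert (IZR k < 1 /\ -1 < IZR k). { pose proof PI_RGT_0. split; nra. }
destruct H0 as [H1 H2]. apply lt_IZR in H1. apply lt_IZR in H2.
assert (k = 0%Z) by lia. subst. simpl. ring.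
Qed.

Lemma L_inv A B : posA A -> posA B -> (forall u, mapply A (mapply B u) = u) ->
  forall x, Lf A (Lf B x) = x.
Proof.
intros HA HB H x.
pose proof (lifts_L A HA (Lf B x)) as E1. pose proof (lifts_L B HB x) as E2.
rewrite E2 in E1. rewrite act_comp in E1 by (auto; apply vnorm_barpi).
unfold barpi in E1. injection E1 as Ec Es.
set (h := Lf A (Lf B x)) in *.
assert (Hs : sin (h - x) = 0). { rewrite sin_minus, Ec, Es. ring. }
assert (- PI < h - x < PI).
{ pose proof (atan_bound' (crossf A (Lf B x) / dotf A (Lf B x))).
  pose proof (atan_bound' (crossf B x / dotf B x)).
  assert (Ey : Lf B x = x + atan (crossf B x / dotf B x)) by reflexivity.
  assert (Eh : h = Lf B x + atan (crossf A (Lf B x) / dotf A (Lf B x))) by reflexivity.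
  lra. }
pose proof (sin0_small _ Hs H0). lra.
Qed.

Lemma posA_adj A : posA A -> posA (adj A).
Proof.
intros HA t. pose proof (HA (t + PI / 2)) as H. unfold dotf, adj in *; simpl.
rewrite cos_plus, sin_plus, cos_PI2, sin_PI2 in H. eapply Rlt_le_trans; [exact H| right; ring].
Qed.

Lemma diffeo_L A : det A = 1 -> posA A -> diffeo (Lf A).
Proof.
intros Hd HA. exists (Lf (adj A)). split; [|split; [|split]].
- apply L_inv. apply posA_adj; auto. auto. apply adj_inv_r; auto.
- apply L_inv; auto. apply posA_adj; auto. apply adj_inv_l; auto.
- apply smooth_L; auto.
- apply smooth_L. apply posA_adj; auto.
Qed.

Lemma canon_L A : det A = 1 -> posA A -> m21 A = 0 -> is_canonical_lift A (Lf A).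
Proof.
intros Hd HA H21. split.
- split. split. apply diffeo_L; auto. exists A. split; auto. apply lifts_L; auto.
  left. apply lifts_L; auto.
- exists 0. unfold Lf, crossf. rewrite H21, sin_0, cos_0.
  replace (1 * (0 * 1 + m22 A * 0) - 0 * (m11 A * 1 + m12 A * 0)) with 0 by ring.
  unfold Rdiv. rewrite Rmult_0_l, atan_0. ring.
Qed.

Lemma canonical_spec A : det A = 1 -> posA A -> m21 A = 0 ->
  is_canonical_lift A (canonical_lift A).
Proof.
intros. unfold canonical_lift. apply epsilon_spec. exists (Lf A). apply canon_L; auto.
Qed.

Lemma vnorm_act_pos A t : det A = 1 -> 0 < vnorm (mapply A (barpi t)).
Proof.
intro H. apply (mapply_pos (adj A) A). apply adj_inv_r; auto. apply vnorm_barpi.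
Qed.

Lemma lift_sincos M c y : lifts M c ->
  sin (c y - y) = crossf M y / vnorm (mapply M (barpi y)) /\
  cos (c y - y) = dotf M y / vnorm (mapply M (barpi y)).
Proof.
intro H. pose proof (H y) as E. unfold actS1, barpi, mapply in E. cbn [fst snd] in E.
injection E as Ec Es. unfold barpi, mapply.
rewrite sin_minus, cos_minus, Ec, Es. unfold crossf, dotf. cbn [fst snd]. split; unfold Rdiv; ring.
Qed.

Lemma lift_sin_scale A g s t : det A = 1 -> lifts A g ->
  exists K, 0 < K /\ sin (g s - g t) = K * sin (s - t).
Proof.
intros Hd H. pose proof (H s) as Es. pose proof (H t) as Et.
pose proof (vnorm_act_pos A s Hd) as Rs. pose proof (vnorm_act_pos A t Hd) as Rt.
unfold actS1 in Es, Et. unfold barpi in *.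
set (rs := vnorm (mapply A (cos s, sin s))) in *.
set (rt := vnorm (mapply A (cos t, sin t))) in *.
unfold mapply in Es, Et. cbn [fst snd] in Es, Et.
injection Es as Es1 Es2. injection Et as Et1 Et2.
exists (/ (rs * rt)). split. apply Rinv_0_lt_compat. nra.
rewrite sin_minus, Es1, Es2, Et1, Et2, (sin_minus s t).
unfold det in Hd.
transitivity (/ (rs * rt) * (sin s * cos t - cos s * sin t) * (m11 A * m22 A - m12 A * m21 A)).
field. split; lra. rewrite Hd. ring.
Qed.

Lemma tsl_cont g : tildeSL g -> continuity g.
Proof.
intros [[h [_ [_ [Hs _]]]] _] x. apply continuity_pt_filterlim.
apply (ex_derive_continuous g). apply (Hs 1%nat x).
Qed.

Lemma tsl_inj g : tildeSL g -> forall x y, g x = g y -> x = y.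
Proof.
intros [[h [H1 _]] _] x y E. rewrite <- (H1 x), <- (H1 y), E. auto.
Qed.

Lemma tsl_surj g : tildeSL g -> forall a, exists x, g x = a.
Proof.
intros [[h [_ [H2 _]]] _] a. exists (h a). auto.
Qed.

Lemma ivt f x y c : continuity f -> x <= y ->
  (f x <= c <= f y \/ f y <= c <= f x) -> exists z, x <= z <= y /\ f z = c.
Proof.
intros Hc Hxy Hv.
destruct (IVT_cor (fun t => f t - c) x y) as [z [Hz Ez]].
- apply continuity_minus; auto. apply continuity_const. intros ? ?; auto.
- auto.
- destruct Hv; nra.
- exists z. split; auto. lra.
Qed.

Lemma tsl_main g : tildeSL g -> forall t,
  (forall s, t < s < t + PI -> g t < g s < g t + PI) /\ g (t + PI) = g t + PI.
Proof.
intros Hg t. pose proof (tsl_cont g Hg) as Hc.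
destruct Hg as [Hdf [A [Hd Hl]]].
assert (Hsin : forall s, t < s < t + PI -> 0 < sin (g s - g t)).
{ intros s Hs. destruct (lift_sin_scale A g s t Hd Hl) as [K [HK E]]. rewrite E.
  apply Rmult_lt_0_compat; auto. apply sin_gt_0; lra. }
assert (Hcd : continuity (fun s => g s - g t)).
{ apply continuity_minus; auto. apply continuity_const. intros ? ?; auto. }
assert (Hin : forall s, t < s < t + PI -> 0 < g s - g t < PI).
{ intros s Hs. pose proof (Hsin s Hs) as S0.
  destruct (Rlt_or_le PI (g s - g t)) as [H1|H1].
  { destruct (ivt (fun s => g s - g t) t s PI Hcd ltac:(lra) ltac:(left; split; lra)) as [z [Hz Ez]].
    assert (z <> t). { intro; subst. lra. }
    pose proof (Hsin z ltac:(lra)). rewrite Ez, sin_PI in H0. lra. }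
  destruct (Rlt_or_le (g s - g t) (- PI)) as [H2|H2].
  { destruct (ivt (fun s => g s - g t) t s (- PI) Hcd ltac:(lra) ltac:(right; split; lra)) as [z [Hz Ez]].
    assert (z <> t). { intro; subst. pose proof PI_RGT_0. lra. }
    pose proof (Hsin z ltac:(lra)). rewrite Ez, sin_neg, sin_PI in H0. lra. }
  destruct (Req_dec (g s - g t) PI) as [E|E]. { rewrite E, sin_PI in S0; lra. }
  destruct (Req_dec (g s - g t) (-PI)) as [E'|E']. { rewrite E', sin_neg, sin_PI in S0; lra. }
  destruct (Rle_or_lt (g s - g t) 0) as [H3|H3].
  { destruct (Req_dec (g s - g t) 0) as [E0|E0]. { rewrite E0, sin_0 in S0; lra. }
    pose proof (sin_lt_0_var (g s - g t) ltac:(lra) ltac:(lra)). lra. }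
  lra. }
split.
- intros s Hs. pose proof (Hin s Hs). lra.
- destruct (lift_sin_scale A g (t + PI) t Hd Hl) as [K [HK E]].
  replace (t + PI - t) with PI in E by ring. rewrite sin_PI, Rmult_0_r in E.
  destruct (sin_eq_0_0 _ E) as [k Ek].
  pose proof PI_RGT_0 as HP.
  destruct (Z.lt_trichotomy k 1) as [Hk|[Hk|Hk]].
  + destruct (Z.lt_trichotomy k 0) as [Hk'|[Hk'|Hk']]; try lia.
    * assert (IZR k <= -1). { apply IZR_le. lia. }
      destruct (ivt (fun s => g s - g t) t (t + PI) (- (PI/2)) Hcd ltac:(lra) ltac:(right; split; nra)) as [z [Hz Ez]].
      assert (z <> t). { intro; subst. lra. }
      assert (z <> t + PI). { intro; subst. nra. }
      pose proof (Hin z ltac:(lra)). lra.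
    * subst. simpl in Ek. rewrite Rmult_0_l in Ek.
      assert (t + PI = t). { apply (tsl_inj g (conj Hdf (ex_intro _ A (conj Hd Hl)))). lra. }
      lra.
  + subst. lra.
  + assert (IZR k >= 2). { apply Rle_ge, IZR_le. lia. }
    destruct (ivt (fun s => g s - g t) t (t + PI) (3 * PI / 2) Hcd ltac:(lra) ltac:(left; split; nra)) as [z [Hz Ez]].
    assert (z <> t). { intro; subst. lra. }
    assert (z <> t + PI). { intro; subst. nra. }
    pose proof (Hin z ltac:(lra)). lra.
Qed.

Lemma tsl_shift_nat g : tildeSL g -> forall k t, g (t + INR k * PI) = g t + INR k * PI.
Proof.
intros Hg k. induction k as [|k IH]; intro t.
- simpl. rewrite Rmult_0_l, !Rplus_0_r. auto.
- rewrite S_INR. replace (t + (INR k + 1) * PI) with ((t + INR k * PI) + PI) by ring.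
  rewrite (proj2 (tsl_main g Hg _)), IH. ring.
Qed.

Lemma tsl_shift_Z g : tildeSL g -> forall k t, g (t + IZR k * PI) = g t + IZR k * PI.
Proof.
intros Hg k t. destruct (Z_le_gt_dec 0 k) as [H|H].
- rewrite <- (Z2Nat.id k H), <- INR_IZR_INZ. apply tsl_shift_nat; auto.
- assert (E : IZR k = - INR (Z.to_nat (- k))).
  { rewrite INR_IZR_INZ, Z2Nat.id by lia. rewrite opp_IZR. ring. }
  rewrite E. set (j := Z.to_nat (-k)).
  pose proof (tsl_shift_nat g Hg j (t + - INR j * PI)) as H1.
  replace (t + - INR j * PI + INR j * PI) with t in H1 by ring.
  replace (t + - INR j * PI) with (t + - INR j * PI) by ring. lra.
Qed.

Lemma tsl_open g : tildeSL g -> forall x y (k : nat),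
  INR k * PI < y - x < (INR k + 1) * PI -> INR k * PI < g y - g x < (INR k + 1) * PI.
Proof.
intros Hg x y k H.
pose proof (proj1 (tsl_main g Hg (x + INR k * PI)) y ltac:(lra)) as H1.
rewrite tsl_shift_nat in H1 by auto. lra.
Qed.

Lemma tsl_eq g : tildeSL g -> forall x y (k : nat),
  y - x = INR k * PI -> g y - g x = INR k * PI.
Proof.
intros Hg x y k H. replace y with (x + INR k * PI) by lra.
rewrite tsl_shift_nat by auto. ring.
Qed.

Lemma floorZ r : exists m : Z, IZR m <= r < IZR m + 1.
Proof.
destruct (archimed r) as [H1 H2]. exists (up r - 1)%Z. rewrite minus_IZR. lra.
Qed.

Lemma fixed_close c x0 : tildeSL c -> c x0 = x0 -> forall y, - PI < c y - y < PI.
Proof.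
intros Hc H0 y. pose proof PI_RGT_0 as HP.
destruct (floorZ ((y - x0) / PI)) as [m [Hm1 Hm2]].
set (z := x0 + IZR m * PI).
assert (Hz : c z = z). { unfold z. rewrite tsl_shift_Z, H0 by auto. auto. }
assert (Hzy : z <= y < z + PI).
{ unfold z. split.
  - apply (Rmult_le_compat_r PI) in Hm1; [|lra].
    unfold Rdiv in Hm1. rewrite Rmult_assoc, Rinv_l, Rmult_1_r in Hm1 by lra. lra.
  - apply (Rmult_lt_compat_r PI) in Hm2; [|lra].
    unfold Rdiv in Hm2. rewrite Rmult_assoc, Rinv_l, Rmult_1_r in Hm2 by lra. lra. }
destruct (Req_dec y z) as [E|E].
- rewrite E, Hz. lra.
- pose proof (proj1 (tsl_main c Hc z) y ltac:(lra)). rewrite Hz in H. lra.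
Qed.

Lemma nat_between k j z : INR k * PI <= z < (INR k + 1) * PI ->
  INR j * PI <= z < (INR j + 1) * PI -> k = j.
Proof.
intros [H1 H2] [H3 H4]. pose proof PI_RGT_0.
assert (Ha : INR k < INR j + 1) by nra. assert (Hb : INR j < INR k + 1) by nra.
rewrite <- S_INR in Ha, Hb. apply INR_lt in Ha. apply INR_lt in Hb. lia.
Qed.

Lemma W_int a b (k : nat) : b = a + INR k * PI -> W a b = INR k.
Proof.
intro H. pose proof PI_RGT_0.
assert (Hw : winding_rel a b (W a b)).
{ unfold W. apply epsilon_spec. exists (INR k). left. exists k. auto. }
destruct Hw as [[j [Ej Wj]]|[j [Ej Wj]]].
- rewrite Wj. f_equal. apply (nat_between j k (b - a)); split; nra.
- exfalso. assert (j = k) by (apply (nat_between j k (b - a)); split; nra). subst. nra.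
Qed.

Lemma W_half a b (k : nat) : a + INR k * PI < b < a + (INR k + 1) * PI -> W a b = INR k + / 2.
Proof.
intro H. pose proof PI_RGT_0.
assert (Hw : winding_rel a b (W a b)).
{ unfold W. apply epsilon_spec. exists (INR k + / 2). right. exists k. auto. }
destruct Hw as [[j [Ej Wj]]|[j [Ej Wj]]].
- exfalso. assert (j = k) by (apply (nat_between j k (b - a)); split; nra). subst. nra.
- rewrite Wj. f_equal. f_equal. apply (nat_between j k (b - a)); split; nra.
Qed.

Lemma not_int_half (k : nat) : ~ is_integer (INR k + / 2).
Proof.
intros [z Hz]. rewrite INR_IZR_INZ in Hz.
assert (H1 : IZR (Z.of_nat k) < IZR z) by lra.
assert (H2 : IZR z < IZR (Z.of_nat k) + 1) by lra.
apply lt_IZR in H1. rewrite <- plus_IZR in H2. apply lt_IZR in H2. lia.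
Qed.

Lemma int_fix F a : tildeSL F ->
  ((exists k : nat, F a - a = INR k * PI) \/
   (exists k : nat, INR k * PI < F a - a < (INR k + 1) * PI)) ->
  (is_integer (W a (F a)) <-> fixed_by_proj F a).
Proof.
intros HF [[k Hk]|[k Hk]].
- rewrite (W_int a (F a) k) by lra. split.
  + intros _. destruct HF as [_ [A [Hd Hl]]]. exists A. split; auto. split; auto.
    destruct (lift_sincos A F a Hl) as [Es Ec].
    pose proof (vnorm_act_pos A a Hd) as Hr.
    set (r := vnorm (mapply A (barpi a))) in *.
    assert (Hs0 : sin (F a - a) = 0). { rewrite Hk. apply sin_eq_0_1. exists (Z.of_nat k).
      rewrite INR_IZR_INZ. auto. }
    assert (Hcr : crossf A a = 0).
    { rewrite Hs0 in Es. apply (Rmult_eq_compat_r r) in Es.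
      unfold Rdiv in Es. rewrite Rmult_assoc, Rinv_l, Rmult_1_r in Es by lra. lra. }
    assert (Hdt : dotf A a <> 0).
    { intro H0. rewrite H0 in Ec. unfold Rdiv in Ec. rewrite Rmult_0_l in Ec.
      pose proof (sin2_cos2 (F a - a)). rewrite Hs0, Ec in H. unfold Rsqr in H. lra. }
    exists (dotf A a). split; auto.
    pose proof (sc1 a) as Hsc. unfold mapply, barpi. cbn [fst snd].
    f_equal.
    * transitivity ((m11 A * cos a + m12 A * sin a) * (sin a ^ 2 + cos a ^ 2) + sin a * crossf A a).
      rewrite Hsc, Hcr. ring. unfold crossf, dotf. ring.
    * transitivity ((m21 A * cos a + m22 A * sin a) * (sin a ^ 2 + cos a ^ 2) - cos a * crossf A a).
      rewrite Hsc, Hcr. ring. unfold crossf, dotf. ring.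
  + intros _. exists (Z.of_nat k). apply INR_IZR_INZ.
- rewrite (W_half a (F a) k) by lra. split.
  + intro H. exfalso. apply (not_int_half k H).
  + intros [A [Hd [Hl [l [Hl0 Ep]]]]]. exfalso.
    destruct (lift_sincos A F a Hl) as [Es _].
    assert (Hcr : crossf A a = 0).
    { unfold mapply, barpi in Ep. cbn [fst snd] in Ep. injection Ep as E1 E2.
      unfold crossf. rewrite E1, E2. ring. }
    rewrite Hcr in Es. unfold Rdiv in Es. rewrite Rmult_0_l in Es.
    destruct (sin_eq_0_0 _ Es) as [z Hz]. rewrite Hz in Hk.
    pose proof PI_RGT_0. rewrite INR_IZR_INZ in Hk.
    assert (H1 : IZR (Z.of_nat k) < IZR z) by nra.
    assert (H2 : IZR z < IZR (Z.of_nat k) + 1) by nra.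
    apply lt_IZR in H1. rewrite <- plus_IZR in H2. apply lt_IZR in H2. lia.
Qed.

Lemma canon_props A : det A = 1 -> posA A -> m21 A = 0 ->
  tildeSL (canonical_lift A) /\ lifts A (canonical_lift A) /\
  (exists x0, canonical_lift A x0 = x0) /\
  (forall y, - PI < canonical_lift A y - y < PI).
Proof.
intros Hd HA H21. destruct (canonical_spec A Hd HA H21) as [[Ht Hor] [x0 Hx0]].
set (c := canonical_lift A) in *.
split; auto. split.
- destruct Hor as [H|H]; auto. exfalso.
  destruct (lift_sincos (mopp A) c x0 H) as [_ Ec].
  assert (Hd' : det (mopp A) = 1). { unfold det, mopp in *; simpl. lra. }
  pose proof (vnorm_act_pos (mopp A) x0 Hd') as Hr.
  rewrite Hx0, Rminus_diag, cos_0 in Ec.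
  assert (dotf (mopp A) x0 = - dotf A x0). { unfold dotf, mopp; simpl. ring. }
  pose proof (HA x0). rewrite H0 in Ec.
  set (r := vnorm (mapply (mopp A) (barpi x0))) in *.
  assert (- dotf A x0 / r < 0). { apply Rdiv_neg_pos; lra. } lra.
- split. exists x0; auto. apply fixed_close with x0; auto.
Qed.

Lemma conj_case F g c (n : nat) : tildeSL g -> tildeSL c ->
  (forall x, F (g x) = g (c (x + INR n * PI))) -> forall x,
  (c x = x -> F (g x) - g x = INR n * PI) /\
  (- PI < c x - x < 0 -> (1 <= n)%nat ->
     INR (n - 1) * PI < F (g x) - g x < (INR (n - 1) + 1) * PI) /\
  (0 < c x - x < PI -> INR n * PI < F (g x) - g x < (INR n + 1) * PI).
Proof.
intros Hg Hc Hconj x. rewrite Hconj, (tsl_shift_nat c Hc).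
split; [|split].
- intro E. rewrite E. apply tsl_eq; auto. ring.
- intros H Hn. apply tsl_open; auto. rewrite minus_INR by auto. simpl INR. nra.
- intros H. apply tsl_open; auto. nra.
Qed.

Lemma sin_sign u : - PI < u < PI ->
  (sin u < 0 -> u < 0) /\ (0 < sin u -> 0 < u) /\ (sin u <= 0 -> u <= 0) /\ (0 <= sin u -> 0 <= u).
Proof.
intro H. destruct (Rtotal_order u 0) as [H1|[H1|H1]].
- pose proof (sin_lt_0_var u ltac:(lra) H1). repeat split; intros; lra.
- subst. rewrite sin_0. repeat split; intros; lra.
- pose proof (sin_gt_0 u H1 ltac:(lra)). repeat split; intros; lra.
Qed.

Lemma lift_sin_c A c y : det A = 1 -> lifts A c ->
  exists r, 0 < r /\ sin (c y - y) = crossf A y / r.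
Proof.
intros Hd Hl. exists (vnorm (mapply A (barpi y))). split. apply vnorm_act_pos; auto.
apply (lift_sincos A c y Hl).
Qed.

Lemma det_Pplus : det Defs.Pplus = 1. Proof. unfold det, Defs.Pplus; simpl; ring. Qed.
Lemma det_Pminus : det Defs.Pminus = 1. Proof. unfold det, Defs.Pminus; simpl; ring. Qed.
Lemma det_H lam : 0 < lam -> det (Hmat lam) = 1.
Proof. intro. unfold det, Hmat; simpl. field. lra. Qed.

Lemma pos_Pplus : posA Defs.Pplus.
Proof. intro t. unfold dotf, Defs.Pplus; simpl. pose proof (sc1 t). nra. Qed.
Lemma pos_Pminus : posA Defs.Pminus.
Proof. intro t. unfold dotf, Defs.Pminus; simpl. pose proof (sc1 t). nra. Qed.
Lemma pos_H lam : 0 < lam -> posA (Hmat lam).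
Proof.
intros Hl t. unfold dotf, Hmat; simpl. pose proof (sc1 t).
assert (0 < / lam) by (apply Rinv_0_lt_compat; lra).
destruct (Req_dec (cos t) 0) as [E|E].
- rewrite E. assert (sin t ^ 2 = 1) by (rewrite E in H; lra). nra.
- assert (0 < cos t * cos t). { destruct (Rlt_or_le 0 (cos t)); nra. }
  assert (0 <= sin t * sin t) by nra. nra.
Qed.

Lemma cross_Pplus t : crossf Defs.Pplus t = - (sin t * sin t).
Proof. unfold crossf, Defs.Pplus; simpl. ring. Qed.
Lemma cross_Pminus t : crossf Defs.Pminus t = sin t * sin t.
Proof. unfold crossf, Defs.Pminus; simpl. ring. Qed.
Lemma cross_H lam t : crossf (Hmat lam) t = sin t * cos t * (/ lam - lam).
Proof. unfold crossf, Hmat; simpl. ring. Qed.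

Lemma alpha_class alpha : 0 < alpha -> exists k : nat,
  alpha = INR k * PI \/ INR k * PI < alpha < (INR k + 1) * PI.
Proof.
intro Ha. pose proof PI_RGT_0 as HP.
destruct (floorZ (alpha / PI)) as [m [H1 H2]].
assert (Hm : (0 <= m)%Z).
{ assert (-1 < IZR m). { assert (0 < alpha / PI) by (apply Rdiv_lt_0_compat; lra). lra. }
  apply lt_IZR in H. lia. }
exists (Z.to_nat m). rewrite INR_IZR_INZ, Z2Nat.id by auto.
apply (Rmult_le_compat_r PI) in H1; [|lra]. apply (Rmult_lt_compat_r PI) in H2; [|lra].
unfold Rdiv in H1, H2. rewrite Rmult_assoc, Rinv_l, Rmult_1_r in H1, H2 by lra.
destruct H1 as [H1|H1]; [right; lra | left; lra].
Qed.

Lemma INR_half_ne k n : INR k + / 2 <> INR n.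
Proof.
intro E. apply (not_int_half k). exists (Z.of_nat n). rewrite E. apply INR_IZR_INZ.
Qed.

Lemma case_elliptic F (HF : tildeSL F) alpha : 0 < alpha -> conjugate F (tE alpha) ->
  forall (a : R) (n : nat),
   (W a (F a) = INR n <-> alpha = INR n * PI) /\
   (INR n * PI < alpha < (INR n + 1) * PI -> W a (F a) = INR n + / 2).
Proof.
intros Ha [g [Hg Hc]] a n. pose proof PI_RGT_0 as HP.
destruct (tsl_surj g Hg a) as [x <-]. rewrite Hc. unfold tE.
destruct (alpha_class alpha Ha) as [k [Hk|Hk]].
- assert (E : g (x + alpha) - g x = INR k * PI) by (apply tsl_eq; auto; lra).
  rewrite (W_int (g x) (g (x + alpha)) k) by lra. split.
  + split.
    * intro E1. apply INR_eq in E1. subst. auto.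
    * intro E1. f_equal. apply (nat_between k n alpha); split; lra.
  + intro H. exfalso. assert (n = k) by (apply (nat_between n k alpha); split; lra).
    subst. lra.
- assert (E : INR k * PI < g (x + alpha) - g x < (INR k + 1) * PI)
    by (apply tsl_open; auto; lra).
  rewrite (W_half (g x) (g (x + alpha)) k) by lra. split.
  + split.
    * intro E1. exfalso. apply (INR_half_ne k n E1).
    * intro E1. exfalso. assert (n = k) by (apply (nat_between n k alpha); split; lra).
      subst. lra.
  + intro H. assert (n = k) by (apply (nat_between n k alpha); split; lra). subst. auto.
Qed.

Lemma W_of_left F a (k : nat) : F a - a = INR k * PI -> W a (F a) = INR k.
Proof. intro. apply W_int. lra. Qed.
Lemma W_of_right F a (k : nat) : INR k * PI < F a - a < (INR k + 1) * PI ->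
  W a (F a) = INR k + / 2.
Proof. intro. apply W_half. lra. Qed.

Lemma case_Pplus F (HF : tildeSL F) (n : nat) : (1 <= n)%nat -> conjugate F (tPplus n) ->
     (forall a : R,
        INR n - / 2 <= W a (F a) <= INR n /\
        (is_integer (W a (F a)) <-> fixed_by_proj F a)) /\
     (exists a : R, W a (F a) = INR n - / 2) /\
     (exists a : R, W a (F a) = INR n).
Proof.
intros Hn [g [Hg Hc]].
destruct (canon_props Defs.Pplus det_Pplus pos_Pplus eq_refl) as [Hct [Hcl [[x0 Hx0] Hcl2]]].
set (c := canonical_lift Defs.Pplus) in *.
assert (Hconj : forall x, F (g x) = g (c (x + INR n * PI))) by (intro x; apply Hc).
pose proof (conj_case F g c n Hg Hct Hconj) as Hcase.
assert (Hu : forall y, c y = y \/ (- PI < c y - y < 0)).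
{ intro y. destruct (lift_sin_c _ c y det_Pplus Hcl) as [r [Hr Es]].
  rewrite cross_Pplus in Es.
  assert (sin (c y - y) <= 0). { rewrite Es. unfold Rdiv.
    assert (0 <= sin y * sin y) by nra. assert (0 < / r) by (apply Rinv_0_lt_compat; lra). nra. }
  pose proof (Hcl2 y). destruct (sin_sign _ H0) as [_ [_ [H3 _]]].
  specialize (H3 H). destruct H3 as [H3|H3]; [right; lra| left; lra]. }
assert (Hhalf : - PI < c (PI/2) - PI/2 < 0).
{ destruct (lift_sin_c _ c (PI/2) det_Pplus Hcl) as [r [Hr Es]].
  rewrite cross_Pplus, sin_PI2 in Es.
  assert (sin (c (PI/2) - PI/2) < 0). { rewrite Es. unfold Rdiv.
    assert (0 < / r) by (apply Rinv_0_lt_compat; lra). nra. }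
  pose proof (Hcl2 (PI/2)). destruct (sin_sign _ H0) as [H3 _]. split; [lra|auto]. }
assert (Hn1 : INR (n - 1) + / 2 = INR n - / 2) by (rewrite minus_INR by auto; simpl; lra).
assert (Key : forall x,
  (F (g x) - g x = INR n * PI) \/
  (INR (n - 1) * PI < F (g x) - g x < (INR (n - 1) + 1) * PI)).
{ intro x. destruct (Hcase x) as [H1 [H2 _]]. destruct (Hu x) as [E|E].
  left; auto. right; auto. }
split; [|split].
- intro a. destruct (tsl_surj g Hg a) as [x <-]. split.
  + destruct (Key x) as [E|E].
    * rewrite (W_of_left F (g x) n E). lra.
    * rewrite (W_of_right F (g x) (n - 1) E). lra.
  + apply int_fix; auto. destruct (Key x); [left|right]; eauto.
- exists (g (PI/2)). rewrite (W_of_right F (g (PI/2)) (n - 1)); auto.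
  apply (proj1 (proj2 (Hcase (PI/2)))); auto.
- exists (g x0). apply W_of_left. apply (proj1 (Hcase x0)); auto.
Qed.

Lemma case_Pminus F (HF : tildeSL F) (n : nat) : (1 <= n)%nat -> conjugate F (tPminus n) ->
     (forall a : R,
        INR n <= W a (F a) <= INR n + / 2 /\
        (is_integer (W a (F a)) <-> fixed_by_proj F a)) /\
     (exists a : R, W a (F a) = INR n) /\
     (exists a : R, W a (F a) = INR n + / 2).
Proof.
intros Hn [g [Hg Hc]].
destruct (canon_props Defs.Pminus det_Pminus pos_Pminus eq_refl) as [Hct [Hcl [[x0 Hx0] Hcl2]]].
set (c := canonical_lift Defs.Pminus) in *.
assert (Hconj : forall x, F (g x) = g (c (x + INR n * PI))) by (intro x; apply Hc).
pose proof (conj_case F g c n Hg Hct Hconj) as Hcase.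
assert (Hu : forall y, c y = y \/ (0 < c y - y < PI)).
{ intro y. destruct (lift_sin_c _ c y det_Pminus Hcl) as [r [Hr Es]].
  rewrite cross_Pminus in Es.
  assert (0 <= sin (c y - y)). { rewrite Es. unfold Rdiv.
    assert (0 <= sin y * sin y) by nra. assert (0 < / r) by (apply Rinv_0_lt_compat; lra). nra. }
  pose proof (Hcl2 y). destruct (sin_sign _ H0) as [_ [_ [_ H3]]].
  specialize (H3 H). destruct H3 as [H3|H3]; [right; lra| left; lra]. }
assert (Hhalf : 0 < c (PI/2) - PI/2 < PI).
{ destruct (lift_sin_c _ c (PI/2) det_Pminus Hcl) as [r [Hr Es]].
  rewrite cross_Pminus, sin_PI2 in Es.
  assert (0 < sin (c (PI/2) - PI/2)). { rewrite Es. unfold Rdiv.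
    assert (0 < / r) by (apply Rinv_0_lt_compat; lra). nra. }
  pose proof (Hcl2 (PI/2)). destruct (sin_sign _ H0) as [_ [H3 _]]. split; [auto|lra]. }
assert (Key : forall x,
  (F (g x) - g x = INR n * PI) \/
  (INR n * PI < F (g x) - g x < (INR n + 1) * PI)).
{ intro x. destruct (Hcase x) as [H1 [_ H2]]. destruct (Hu x) as [E|E].
  left; auto. right; auto. }
split; [|split].
- intro a. destruct (tsl_surj g Hg a) as [x <-]. split.
  + destruct (Key x) as [E|E].
    * rewrite (W_of_left F (g x) n E). lra.
    * rewrite (W_of_right F (g x) n E). lra.
  + apply int_fix; auto. destruct (Key x); [left|right]; eauto.
- exists (g x0). apply W_of_left. apply (proj1 (Hcase x0)); auto.
- exists (g (PI/2)). apply W_of_right.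
  apply (proj2 (proj2 (Hcase (PI/2)))); auto.
Qed.

Lemma case_H F (HF : tildeSL F) (lam : R) (n : nat) : 1 < lam -> (1 <= n)%nat ->
  conjugate F (tH lam n) ->
     (forall a : R,
        INR n - / 2 <= W a (F a) <= INR n + / 2 /\
        (is_integer (W a (F a)) <-> fixed_by_proj F a)) /\
     (exists a : R, W a (F a) = INR n - / 2) /\
     (exists a : R, W a (F a) = INR n + / 2).
Proof.
intros Hlam Hn [g [Hg Hc]].
assert (Hd : det (Hmat lam) = 1) by (apply det_H; lra).
destruct (canon_props (Hmat lam) Hd (pos_H lam ltac:(lra)) eq_refl) as [Hct [Hcl [[x0 Hx0] Hcl2]]].
set (c := canonical_lift (Hmat lam)) in *.
assert (Hconj : forall x, F (g x) = g (c (x + INR n * PI))) by (intro x; apply Hc).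
pose proof (conj_case F g c n Hg Hct Hconj) as Hcase.
assert (Hil : / lam - lam < 0).
{ assert (/ lam < 1). { rewrite <- Rinv_1. apply Rinv_lt_contravar; lra. } lra. }
assert (HP4 : 0 < sin (PI/4) /\ 0 < cos (PI/4)).
{ pose proof PI_RGT_0. split. apply sin_gt_0; lra. apply cos_gt_0; lra. }
assert (Hm : - PI < c (PI/4) - PI/4 < 0).
{ destruct (lift_sin_c _ c (PI/4) Hd Hcl) as [r [Hr Es]].
  rewrite cross_H in Es.
  assert (sin (c (PI/4) - PI/4) < 0). { rewrite Es. unfold Rdiv.
    assert (0 < / r) by (apply Rinv_0_lt_compat; lra).
    assert (0 < sin (PI/4) * cos (PI/4)) by nra.
    assert (sin (PI / 4) * cos (PI / 4) * (/ lam - lam) < 0) by nra. nra. }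
  pose proof (Hcl2 (PI/4)). destruct (sin_sign _ H0) as [H3 _]. split; [lra|auto]. }
assert (Hp : 0 < c (-(PI/4)) - -(PI/4) < PI).
{ destruct (lift_sin_c _ c (-(PI/4)) Hd Hcl) as [r [Hr Es]].
  rewrite cross_H, sin_neg, cos_neg in Es.
  assert (0 < sin (c (-(PI/4)) - -(PI/4))). { rewrite Es. unfold Rdiv.
    assert (0 < / r) by (apply Rinv_0_lt_compat; lra).
    assert (0 < sin (PI/4) * cos (PI/4)) by nra.
    assert (0 < - sin (PI / 4) * cos (PI / 4) * (/ lam - lam)) by nra. nra. }
  pose proof (Hcl2 (-(PI/4))). destruct (sin_sign _ H0) as [_ [H3 _]]. split; [auto|lra]. }
assert (Hn1 : INR (n - 1) + / 2 = INR n - / 2) by (rewrite minus_INR by auto; simpl; lra).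
split; [|split].
- intro a. destruct (tsl_surj g Hg a) as [x <-].
  destruct (Hcase x) as [H1 [H2 H3]].
  destruct (Rtotal_order (c x - x) 0) as [E|[E|E]].
  + assert (E' : - PI < c x - x < 0) by (pose proof (Hcl2 x); lra).
    specialize (H2 E' Hn). split.
    * rewrite (W_of_right F (g x) (n - 1) H2). lra.
    * apply int_fix; auto. right; eauto.
  + assert (E' : c x = x) by lra. specialize (H1 E'). split.
    * rewrite (W_of_left F (g x) n H1). lra.
    * apply int_fix; auto. left; eauto.
  + assert (E' : 0 < c x - x < PI) by (pose proof (Hcl2 x); lra).
    specialize (H3 E'). split.
    * rewrite (W_of_right F (g x) n H3). lra.
    * apply int_fix; auto. right; eauto.
- exists (g (PI/4)). rewrite (W_of_right F (g (PI/4)) (n - 1)); auto.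
  apply (proj1 (proj2 (Hcase (PI/4)))); auto.
- exists (g (-(PI/4))). apply W_of_right.
  apply (proj2 (proj2 (Hcase (-(PI/4))))); auto.
Qed.

Theorem mainTheorem13 (F : R -> R) (HF : tildeSL F) :
  (forall alpha : R, 0 < alpha -> conjugate F (tE alpha) ->
     forall (a : R) (n : nat),
       (W a (F a) = INR n <-> alpha = INR n * PI) /\
       (INR n * PI < alpha < (INR n + 1) * PI -> W a (F a) = INR n + / 2)) /\
  (forall n : nat, (1 <= n)%nat -> conjugate F (tPplus n) ->
     (forall a : R,
        INR n - / 2 <= W a (F a) <= INR n /\
        (is_integer (W a (F a)) <-> fixed_by_proj F a)) /\
     (exists a : R, W a (F a) = INR n - / 2) /\
     (exists a : R, W a (F a) = INR n)) /\
  (forall n : nat, (1 <= n)%nat -> conjugate F (tPminus n) ->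
     (forall a : R,
        INR n <= W a (F a) <= INR n + / 2 /\
        (is_integer (W a (F a)) <-> fixed_by_proj F a)) /\
     (exists a : R, W a (F a) = INR n) /\
     (exists a : R, W a (F a) = INR n + / 2)) /\
  (forall (lam : R) (n : nat), 1 < lam -> (1 <= n)%nat -> conjugate F (tH lam n) ->
     (forall a : R,
        INR n - / 2 <= W a (F a) <= INR n + / 2 /\
        (is_integer (W a (F a)) <-> fixed_by_proj F a)) /\
     (exists a : R, W a (F a) = INR n - / 2) /\
     (exists a : R, W a (F a) = INR n + / 2)).
Proof.
split; [|split; [|split]].
- intros. apply (case_elliptic F HF alpha); auto.
- intros. apply case_Pplus; auto.
- intros. apply case_Pminus; auto.
- intros lam n H1 H2 H3. apply (case_H F HF lam n); auto.
Qed.
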